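(* Let $(\mathcal X,R)$ be a quantum poset and let $\mathcal W$ be any quantum set. Then the relation $\sqsubseteq$ on the set $\mathbf{qSet}(\mathcal W,\mathcal X)$ of functions $\mathcal W\to\mathcal X$, defined by $F\sqsubseteq G$ iff $G\le R\circ F$, is a partial order (reflexive, transitive and antisymmetric).
   Context: A quantum set $\mathcal X$ is a set $\mathrm{At}(\mathcal X)$ of nonzero finite-dimensional Hilbert spaces, called its atoms. A (binary) relation $R$ from a quantum set $\mathcal X$ to a quantum set $\mathcal Y$ is a choice of a linear subspace $R(X,Y)\subseteq L(X,Y)$ for every $X\in\mathrm{At}(\mathcal X)$, $Y\in\mathrm{At}(\mathcal Y)$. Composition: $(S\circ R)(X,Z)=\mathrm{span}\{sr: r\in R(X,Y),\ s\in S(Y,Z),\ Y\in\mathrm{At}(\mathcal Y)\}$. Identity: $I_{\mathcal X}(X,X)=\mathbb C\cdot 1_X$ and $I_{\mathcal X}(X,X')=0$ for $X\ne X'$. Adjoint: $R^\dagger(Y,X)=\{r^\dagger : r\in R(X,Y)\}$. Order: $R\le S$ iff $R(X,Y)\subseteq S(X,Y)$ for all atoms $X,Y$; meets $\wedge$ (also infinite) are entrywise intersections. A function $F:\mathcal X\to\mathcal Y$ is a relation from $\mathcal X$ to $\mathcal Y$ with $F\circ F^\dagger\le I_{\mathcal Y}$ and $F^\dagger\circ F\ge I_{\mathcal X}$; quantum sets and functions form the category $\mathbf{qSet}$. A quantum poset is a pair $(\mathcal X,R)$ with $R$ a relation from $\mathcal X$ to $\mathcal X$ satisfying $I_{\mathcal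 X}\le R$, $R\circ R\le R$, and $R\wedge R^\dagger\le I_{\mathcal X}$. *)

(* Defs.v *)
From mathcomp Require Import all_boot all_order all_algebra.
Set Implicit Arguments. Unset Strict Implicit. Unset Printing Implicit Defensive.
Import Order.TTheory GRing.Theory Num.Theory.
Local Open Scope ring_scope.

(* A quantum set: an (arbitrary, possibly infinite) family of atoms, each atom
   being a nonzero finite-dimensional Hilbert space, represented up to unitary
   isomorphism by C^(qdim X) with its standard inner product. *)
Record qset := QSet {
  qatom : Type;
  qdim : qatom -> nat;
  qdim_gt0 : forall X, (0 < qdim X)%N }.

Section QRel.
Variable C : numClosedFieldType.

(* subsets of L(C^n, C^m) = 'M[C]_(m, n) *)
Definition mxset (m n : nat) := 'M[C]_(m, n) -> Prop.

Definition is_subspace m n (U : mxset m n) : Prop :=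
  U 0 /\ forall (a : C) x y, U x -> U y -> U (a *: x + y).

Definition mxspan m n (S : mxset m n) : mxset m n :=
  fun x => forall U : mxset m n, is_subspace U -> (forall y, S y -> U y) -> U x.

Definition mxadj m n (A : 'M[C]_(m, n)) : 'M[C]_(n, m) := map_mx (fun z => z^*) A^T.

(* a (candidate) relation: a subset R(X,Y) of L(X,Y) for all atoms X, Y *)
Definition qrel (A B : qset) :=
  forall (X : qatom A) (Y : qatom B), mxset (qdim Y) (qdim X).

Definition is_qrel A B (R : qrel A B) : Prop :=
  forall X Y, is_subspace (R X Y).

Definition qcomp A B D (S : qrel B D) (R : qrel A B) : qrel A D :=
  fun X Z => mxspan (fun m => exists (Y : qatom B) r s,
                       R X Y r /\ S Y Z s /\ m = s *m r).

Definition qid (A : qset) : qrel A A :=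
  fun X X' m => m = 0 \/
    exists (e : X = X') (c : C),
      m = c *: castmx (f_equal (@qdim A) e, erefl (qdim X)) (1%:M : 'M[C]_(qdim X)).

Definition qadj A B (R : qrel A B) : qrel B A :=
  fun Y X m => exists r, R X Y r /\ m = mxadj r.

Definition qmeet A B (R S : qrel A B) : qrel A B :=
  fun X Y m => R X Y m /\ S X Y m.

Definition qle A B (R S : qrel A B) : Prop :=
  forall X Y m, R X Y m -> S X Y m.

Definition is_qfun A B (F : qrel A B) : Prop :=
  [/\ is_qrel F, qle (qcomp F (qadj F)) (@qid B) & qle (@qid A) (qcomp (qadj F) F)].

Definition is_qposet A (R : qrel A A) : Prop :=
  [/\ is_qrel R, qle (@qid A) R, qle (qcomp R R) R & qle (qmeet R (qadj R)) (@qid A)].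

Definition qfun_le A W (R : qrel A A) (F G : qrel W A) : Prop :=
  qle G (qcomp R F).

End QRel.

(* Main.v *)
Require Import Defs.
From mathcomp Require Import all_boot all_order all_algebra.
From Stdlib Require Import FunctionalExtensionality PropExtensionality.
Import Order.TTheory GRing.Theory Num.Theory.
Set Implicit Arguments. Unset Strict Implicit.
Local Open Scope ring_scope.
Section S.
Variable C : numClosedFieldType.
Lemma adjK m n (A : 'M[C]_(m,n)) : mxadj (mxadj A) = A.
Proof. by apply/matrixP=> i j; rewrite !mxE conjCK. Qed.
Lemma adjM m n p (A : 'M[C]_(m,n)) (B : 'M[C]_(n,p)) : mxadj (A *m B) = mxadj B *m mxadj A.
Proof. by rewrite /mxadj trmx_mul map_mxM. Qed.
Lemma adjL m n a (A B : 'M[C]_(m,n)) : mxadj (a *: A + B) = a^* *: mxadj A + mxadj B.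
Proof. by apply/matrixP=> i j; rewrite !mxE rmorphD rmorphM. Qed.
Lemma adj0 m n : mxadj (0 : 'M[C]_(m,n)) = 0.
Proof. by apply/matrixP=> i j; rewrite !mxE rmorph0. Qed.

Lemma span_sub m n (S U : mxset C m n) : is_subspace U -> (forall y, S y -> U y) ->
  forall x, mxspan S x -> U x.
Proof. by move=> hU hS x hx; apply: hx. Qed.
Lemma span_gen m n (S : mxset C m n) x : S x -> mxspan S x.
Proof. by move=> hx U _ h; apply: h. Qed.
Lemma span_subspace m n (S : mxset C m n) : is_subspace (mxspan S).
Proof.
split; first by move=> U [] //.
move=> a x y hx hy U hU hS; case: (hU) => _ h; apply: h; [exact: hx | exact: hy].
Qed.

Lemma sub_mulr m n p (U : mxset C m p) (r : 'M[C]_(n,p)) : is_subspace U ->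
  is_subspace (fun x : 'M[C]_(m,n) => U (x *m r)).
Proof.
move=> [h0 hl]; split; first by rewrite mul0mx.
by move=> a x y hx hy; rewrite mulmxDl -scalemxAl; apply: hl.
Qed.
Lemma sub_mull m n p (U : mxset C m p) (s : 'M[C]_(m,n)) : is_subspace U ->
  is_subspace (fun x : 'M[C]_(n,p) => U (s *m x)).
Proof.
move=> [h0 hl]; split; first by rewrite mulmx0.
by move=> a x y hx hy; rewrite mulmxDr -scalemxAr; apply: hl.
Qed.
Lemma sub_adj m n (U : mxset C n m) : is_subspace U ->
  is_subspace (fun x : 'M[C]_(m,n) => U (mxadj x)).
Proof.
move=> [h0 hl]; split; first by rewrite adj0.
by move=> a x y hx hy; rewrite adjL; apply: hl.
Qed.

Variables (A B D E : qset).

Lemma comp_rel (S : qrel C B D) (R : qrel C A B) : is_qrel (qcomp S R).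
Proof. by move=> X Y; apply: span_subspace. Qed.

Lemma comp_monol (S S' : qrel C B D) (R : qrel C A B) :
  qle S S' -> qle (qcomp S R) (qcomp S' R).
Proof.
move=> h X Z; apply: span_sub; first exact: span_subspace.
move=> y [Y [r [s [hr [hs ->]]]]]; apply: span_gen; exists Y, r, s; split=> //; split=> //.
exact: h.
Qed.

Lemma comp_monor (S : qrel C B D) (R R' : qrel C A B) :
  qle R R' -> qle (qcomp S R) (qcomp S R').
Proof.
move=> h X Z; apply: span_sub; first exact: span_subspace.
move=> y [Y [r [s [hr [hs ->]]]]]; apply: span_gen; exists Y, r, s; split=> //.
exact: h.
Qed.

Lemma assoc1 (T : qrel C D E) (S : qrel C B D) (R : qrel C A B) :
  qle (qcomp (qcomp T S) R) (qcomp T (qcomp S R)).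
Proof.
move=> X Z; apply: span_sub; first exact: span_subspace.
move=> y [Y [r [m [hr [hm ->]]]]].
move: m hm; apply: span_sub; first by apply: sub_mulr; apply: span_subspace.
move=> y' [Y' [s [t [hs [ht ->]]]]].
rewrite -mulmxA; apply: span_gen; exists Y', (s *m r), t; split; last by split.
by apply: span_gen; exists Y, r, s.
Qed.

Lemma assoc2 (T : qrel C D E) (S : qrel C B D) (R : qrel C A B) :
  qle (qcomp T (qcomp S R)) (qcomp (qcomp T S) R).
Proof.
move=> X Z; apply: span_sub; first exact: span_subspace.
move=> y [Y [m [t [hm [ht ->]]]]].
move: m hm; apply: span_sub; first by apply: sub_mull; apply: span_subspace.
move=> y' [Y' [r [s [hr [hs ->]]]]].
rewrite mulmxA; apply: span_gen; exists Y', r, (t *m s); split=> //; split=> //.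
by apply: span_gen; exists Y, s, t.
Qed.

Lemma idl (F : qrel C A B) : is_qrel F -> qle (qcomp (@qid C B) F) F.
Proof.
move=> hF X Z; apply: span_sub; first exact: hF.
move=> y [Y [r [i [hr [hi ->]]]]].
case: hi => [->|[e [c ->]]]; first by rewrite mul0mx; case: (hF X Z).
subst Z; rewrite castmx_id -scalemxAl mul1mx.
case: (hF X Y) => h0 hl; rewrite -[_ *: r]addr0; exact: hl.
Qed.

Lemma idl' (F : qrel C A B) : qle F (qcomp (@qid C B) F).
Proof.
move=> X Y f hf; apply: span_gen; exists Y, f, 1%:M; split=> //; split; last by rewrite mul1mx.
right; exists erefl, 1; by rewrite castmx_id scale1r.
Qed.

Lemma idr (F : qrel C A B) : is_qrel F -> qle (qcomp F (@qid C A)) F.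
Proof.
move=> hF X Z; apply: span_sub; first exact: hF.
move=> y [Y [i [r [hi [hr ->]]]]].
case: hi => [->|[e [c ->]]]; first by rewrite mulmx0; case: (hF X Z).
subst Y; rewrite castmx_id -scalemxAr mulmx1.
case: (hF X Z) => h0 hl; rewrite -[_ *: r]addr0; exact: hl.
Qed.

Lemma idr' (F : qrel C A B) : qle F (qcomp F (@qid C A)).
Proof.
move=> X Y f hf; apply: span_gen; exists X, 1%:M, f; split; last by rewrite mulmx1.
right; exists erefl, 1; by rewrite castmx_id scale1r.
Qed.

Lemma qle_trans (P Q S : qrel C A B) : qle P Q -> qle Q S -> qle P S.
Proof. by move=> h1 h2 X Y m /h1 /h2. Qed.

End S.

Section M.
Variable C : numClosedFieldType.

Lemma key (X W : qset) (R : qrel C X X) (F G : qrel C W X) :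
  is_qrel R -> is_qfun F -> qle G (qcomp R F) -> qle (qcomp G (qadj F)) R.
Proof.
move=> hR [hF hFF _] h.
apply: qle_trans; first exact: (comp_monol (R:=qadj F) h).
apply: qle_trans; first exact: assoc1.
apply: qle_trans; first exact: (comp_monor (S:=R) hFF).
exact: idr.
Qed.

Lemma adjstep (X W : qset) (R : qrel C X X) (F G : qrel C W X) :
  is_qrel R -> qle (qcomp F (qadj G)) R -> qle (qcomp G (qadj F)) (qadj R).
Proof.
move=> hR h Y Z m hm; exists (mxadj m); split; last by rewrite adjK.
move: m hm; apply: span_sub; first by apply: sub_adj; apply: hR.
move=> y [V [r' [g [[f [hf ->]] [hg ->]]]]].
rewrite adjM adjK; apply: h; apply: span_gen; exists V, (mxadj g), f; split=> //.
by exists g.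
Qed.

Lemma half (X W : qset) (R : qrel C X X) (F G : qrel C W X) :
  is_qposet R -> is_qfun F -> is_qfun G ->
  qle G (qcomp R F) -> qle F (qcomp R G) -> qle G F.
Proof.
move=> [hR _ _ hanti] hFf hGf h1 h2.
have k1 := key hR hFf h1.
have k2 := key hR hGf h2.
have k3 := adjstep hR k2.
have k4 : qle (qcomp G (qadj F)) (@qid C X).
  by move=> Y Z m hm; apply: hanti; split; [apply: k1 | apply: k3].
case: hFf => hF _ hFF; case: hGf => hG _ _.
apply: qle_trans; first exact: idr'.
apply: qle_trans; first exact: (comp_monor (S:=G) hFF).
apply: qle_trans; first exact: assoc2.
apply: qle_trans; first exact: (comp_monol (R:=F) k4).
exact: idl.
Qed.

End M.

Theorem mainTheorem1 (C : numClosedFieldType) (X : qset) (R : qrel C X X)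
  (HR : is_qposet R) (W : qset) :
  (forall F : qrel C W X, is_qfun F -> qfun_le R F F) /\
  (forall F G H : qrel C W X, is_qfun F -> is_qfun G -> is_qfun H ->
     qfun_le R F G -> qfun_le R G H -> qfun_le R F H) /\
  (forall F G : qrel C W X, is_qfun F -> is_qfun G ->
     qfun_le R F G -> qfun_le R G F -> F = G).
Proof.
have HR' := HR; case: HR' => hR hI hRR _.
split; [|split].
- move=> F _; apply: qle_trans; first exact: idl'.
  exact: (comp_monol (R:=F) hI).
- move=> F G H _ _ _ h1 h2.
  apply: qle_trans; first exact: h2.
  apply: qle_trans; first exact: (comp_monor (S:=R) h1).
  apply: qle_trans; first exact: assoc2.
  exact: (comp_monol (R:=F) hRR).
- move=> F G hF hG h1 h2.
  have a := half HR hF hG h1 h2.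
  have b := half HR hG hF h2 h1.
  apply: functional_extensionality_dep => x.
  apply: functional_extensionality_dep => y.
  apply: functional_extensionality => m.
  apply: propositional_extensionality; split; [exact: b | exact: a].
Qed.
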